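(* Let $I\subseteq\mathbb{R}_+$ be a nonempty, non-singleton interval and let $n\in\mathbb{N}$. If $\Phi: I\to\mathbb{R}_+$ is subadditive of order $n$, then $\Phi$ is also subadditive of order $n+1$.
   Context: $\mathbb{R}_+$ denotes the set of nonnegative real numbers. For $n\in\mathbb{N}$, a function $\Phi: I\to\mathbb{R}_+$ is called subadditive of order $n$ if for all $x,y\in I$ with $y>0$ and $x+y\in I$ one has $\Phi(x+y)\leq \Phi(x)+\frac{(x+y)^n-x^n}{y^n}\Phi(y)$. *)

(* Defs.v *)
From HB Require Import structures.
From mathcomp Require Import all_boot all_order all_algebra.
From mathcomp Require Import reals.
Set Implicit Arguments. Unset Strict Implicit. Unset Printing Implicit Defensive.
Import Order.TTheory GRing.Theory Num.Theory.
Local Open Scope ring_scope.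

Definition subadditive_of_order (R : realType) (I : interval R) (n : nat)
  (Phi : R -> R) : Prop :=
  forall x y : R, x \in I -> y \in I -> 0 < y -> x + y \in I ->
    Phi (x + y) <= Phi x + ((x + y) ^+ n - x ^+ n) / y ^+ n * Phi y.

(* Main.v *)
Require Import Defs.
From HB Require Import structures.
From mathcomp Require Import all_boot all_order all_algebra.
From mathcomp Require Import reals.
From mathcomp Require Import ring lra.
Import Order.TTheory GRing.Theory Num.Theory.
Local Open Scope ring_scope.

Theorem theorem2p1 (R : realType) (I : interval R) (n : nat) (Phi : R -> R) :
  (forall x : R, x \in I -> 0 <= x) ->
  (exists a b : R, [/\ a \in I, b \in I & a < b]) ->
  (forall x : R, x \in I -> 0 <= Phi x) ->
  subadditive_of_order I n Phi ->
  subadditive_of_order I n.+1 Phi.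
Proof.
move=> Hnn _ Hpos Hs x y xI yI y0 xyI.
apply: le_trans (Hs x y xI yI y0 xyI) _.
rewrite lerD2l; apply: ler_wpM2r; first exact: Hpos.
have x0 := Hnn x xI.
have yn0 : y ^+ n != 0 by rewrite expf_neq0 // gt_eqF.
have -> : ((x + y) ^+ n - x ^+ n) / y ^+ n
        = (y * ((x + y) ^+ n - x ^+ n)) / y ^+ n.+1.
  by rewrite exprS; field; rewrite yn0 gt_eqF.
apply: ler_wpM2r; first by rewrite invr_ge0 exprn_ge0 // ltW.
rewrite -subr_ge0.
have -> : (x + y) ^+ n.+1 - x ^+ n.+1 - y * ((x + y) ^+ n - x ^+ n)
        = x * ((x + y) ^+ n - x ^+ n) + y * x ^+ n by rewrite !exprS; ring.
apply: addr_ge0; apply: mulr_ge0 => //; try exact: ltW; try exact: exprn_ge0.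
rewrite subr_ge0 lerXn2r ?nnegrE //. all: try lra.
Qed.
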